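(* Let $\nu\in\mathbb M$ and $\theta_k=\theta_k[\nu]$. Then for all $k\ge0$, $$\mathbb S^{2^k}\theta_k=\theta_k,\qquad \theta_k=\tfrac12\bigl(\theta_{k+1}+\mathbb S^{2^k}\theta_{k+1}\bigr),$$ and the sequence $(\theta_k[\nu])_{k\ge0}$ uniquely determines the whole family $\mathcal P_{r,k}[\nu]$ and the measure $\nu$. Conversely, if a sequence $(\theta_k)_{k\ge0}$ of Borel probability measures on $I^{\mathbb Z}$ satisfies these two relations for all $k\ge0$, then there is a unique $\nu\in\mathbb M$ with $\theta_k[\nu]=\theta_k$ for all $k\ge0$.
   Context: $I=\{0,1\}$. $\mathbb S$ is the left shift on $I^{\mathbb Z}$, $(\mathbb Sw)(j)=w(j+1)$; for a measure $\eta$, $\mathbb S^j\eta$ denotes the pushforward $\eta\circ\mathbb S^{-j}$. $I^{\mathbb N}$ is the space of $0$–$1$ sequences $(\alpha_i)_{i\ge1}$ with uniform Bernoulli measure $m$, and $\mathbb O$ is the odometer: if $\alpha_1=\dots=\alpha_{n-1}=1$, $\alpha_n=0$ then $\mathbb O[\alpha]_i=0$ ($i<n$), $\mathbb O[\alpha]_n=1$, $\mathbb O[\alpha]_i=\alpha_i$ ($i>n$). $\mathbb M$ is the set of Borel probability measures on $I^{\mathbb Z}\times I^{\mathbb N}$ invariant under $\mathbb S\times\mathbb O$. For $k\ge0$, $0\le r\le 2^k-1$, $A_{r,k}=\{\alpha:\sum_{i=1}^k\alpha_i2^{i-1}=r\}$; $\mathcal P_{r,k}[\nu]$ is the normalized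 projection to $I^{\mathbb Z}$ of the restriction of $\nu$ to $I^{\mathbb Z}\times A_{r,k}$, and $\theta_k[\nu]=\mathcal P_{0,k}[\nu]$ (so $\theta_0[\nu]$ is the projection of $\nu$ to $I^{\mathbb Z}$). *)

(* Defs.v *)
From Stdlib Require Import Reals ZArith Arith List.
Open Scope R_scope.

Definition bseqZ := Z -> bool.
(* I^N : index n : nat encodes alpha_{n+1} *)
Definition bseqN := nat -> bool.
Definition XProd := (bseqZ * bseqN)%type.

Inductive measurable {X : Type} (gen : (X -> Prop) -> Prop) : (X -> Prop) -> Prop :=
| meas_gen : forall A, gen A -> measurable gen A
| meas_full : measurable gen (fun _ => True)
| meas_compl : forall A, measurable gen A -> measurable gen (fun x => ~ A x)
| meas_union : forall A : nat -> X -> Prop,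
    (forall n, measurable gen (A n)) -> measurable gen (fun x => exists n, A n x).

(* Cylinder generators: the generated sigma-algebra is the product (= Borel)
   sigma-algebra of these Cantor spaces. *)
Definition genZ (A : bseqZ -> Prop) : Prop :=
  exists (z : Z) (b : bool), forall w, A w <-> w z = b.
Definition genProd (A : XProd -> Prop) : Prop :=
  (exists (z : Z) (b : bool), forall p, A p <-> fst p z = b) \/
  (exists (i : nat) (b : bool), forall p, A p <-> snd p i = b).

Definition BorelZ := measurable genZ.
Definition BorelProd := measurable genProd.

Definition is_prob_measure {X : Type} (gen : (X -> Prop) -> Prop)
  (mu : (X -> Prop) -> R) : Prop :=
  (forall A, measurable gen A -> 0 <= mu A) /\
  mu (fun _ => True) = 1 /\
  (forall A : nat -> X -> Prop,
     (forall n, measurable gen (A n)) ->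
     (forall n m x, n <> m -> A n x -> A m x -> False) ->
     infinite_sum (fun n => mu (A n)) (mu (fun x => exists n, A n x))).

Definition meas_eq {X : Type} (gen : (X -> Prop) -> Prop)
  (mu1 mu2 : (X -> Prop) -> R) : Prop :=
  forall A, measurable gen A -> mu1 A = mu2 A.

Definition shiftn (n : nat) (w : bseqZ) : bseqZ := fun j => w (j + Z.of_nat n)%Z.
Definition shift : bseqZ -> bseqZ := shiftn 1.

(* odometer: flip all leading 1's to 0 and the first 0 to 1
   (the all-ones sequence is sent to all zeros) *)
Definition odometer (a : bseqN) : bseqN :=
  fun i => if forallb a (seq 0 i) then negb (a i) else a i.

Definition pushforward {X Y : Type} (f : X -> Y) (mu : (X -> Prop) -> R)
  : (Y -> Prop) -> R := fun A => mu (fun x => A (f x)).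

(* S^j eta = eta o S^{-j} *)
Definition shift_meas (n : nat) (eta : (bseqZ -> Prop) -> R) : (bseqZ -> Prop) -> R :=
  pushforward (shiftn n) eta.

Definition SxO (p : XProd) : XProd := (shift (fst p), odometer (snd p)).

Definition inM (nu : (XProd -> Prop) -> R) : Prop :=
  is_prob_measure genProd nu /\ meas_eq genProd (pushforward SxO nu) nu.

Fixpoint bin_val (a : bseqN) (k : nat) : nat :=
  match k with
  | O => 0%nat
  | S k' => (bin_val a k' + (if a k' then 2 ^ k' else 0))%nat
  end.

Definition A_rk (r k : nat) (a : bseqN) : Prop := bin_val a k = r.

Definition P_rk (r k : nat) (nu : (XProd -> Prop) -> R) : (bseqZ -> Prop) -> R :=
  fun B => nu (fun p => B (fst p) /\ A_rk r k (snd p))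
           / nu (fun p => A_rk r k (snd p)).

Definition theta (k : nat) (nu : (XProd -> Prop) -> R) : (bseqZ -> Prop) -> R :=
  P_rk 0 k nu.

Definition theta_relations (th : nat -> (bseqZ -> Prop) -> R) : Prop :=
  forall k : nat,
    meas_eq genZ (shift_meas (2 ^ k) (th k)) (th k) /\
    meas_eq genZ (th k)
      (fun B => / 2 * (th (S k) B + shift_meas (2 ^ k) (th (S k)) B)).

(* Main.v *)
Require Import Defs.
From Stdlib Require Import Reals ZArith Arith List Lia Lra Classical ClassicalEpsilon FunctionalExtensionality PropExtensionality.
Open Scope R_scope.

Lemma pext {X : Type} (A B : X -> Prop) : (forall x, A x <-> B x) -> A = B.
Proof. intros H; apply functional_extensionality; intro x; apply propositional_extensionality; auto. Qed.

Definition disj {X : Type} (F : nat -> X -> Prop) : Prop :=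
  forall n m x, n <> m -> F n x -> F m x -> False.

Section Meas.
Context {X : Type} (gen : (X -> Prop) -> Prop).

Lemma m_full : measurable gen (fun _ => True).
Proof. apply meas_full. Qed.

Lemma m_empty : measurable gen (fun _ => False).
Proof.
  replace (fun _ : X => False) with (fun x : X => ~ (fun _ => True) x).
  - apply meas_compl, meas_full.
  - apply pext; intuition.
Qed.

Lemma m_compl A : measurable gen A -> measurable gen (fun x => ~ A x).
Proof. apply meas_compl. Qed.

Lemma m_union2 A B : measurable gen A -> measurable gen B -> measurable gen (fun x => A x \/ B x).
Proof.
  intros HA HB.
  replace (fun x => A x \/ B x) with (fun x => exists n, (fun n : nat => match n with O => A | _ => B end) n x).
  - apply meas_union. intros [|n]; auto.
  - apply pext; intro x; split.
    + intros [[|n] H]; auto.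
    + intros [H|H]; [exists O|exists 1%nat]; auto.
Qed.

Lemma m_inter2 A B : measurable gen A -> measurable gen B -> measurable gen (fun x => A x /\ B x).
Proof.
  intros HA HB.
  replace (fun x => A x /\ B x) with (fun x => ~ (fun x => (fun x => ~ A x) x \/ (fun x => ~ B x) x) x).
  - apply m_compl, m_union2; apply m_compl; auto.
  - apply pext; intro x; split.
    + intro H; split; apply NNPP; intro; apply H; auto.
    + intros [H1 H2] [H|H]; auto.
Qed.

Lemma m_const (P : Prop) : measurable gen (fun _ => P).
Proof.
  destruct (classic P) as [H|H].
  - replace (fun _ : X => P) with (fun _ : X => True) by (apply pext; intuition). apply m_full.
  - replace (fun _ : X => P) with (fun _ : X => False) by (apply pext; intuition). apply m_empty.
Qed.

Lemma m_union (F : nat -> X -> Prop) : (forall n, measurable gen (F n)) -> measurable gen (fun x => exists n, F n x).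
Proof. apply meas_union. Qed.

Lemma m_finunion (F : nat -> X -> Prop) n : (forall i, measurable gen (F i)) ->
  measurable gen (fun x => exists i, (i < n)%nat /\ F i x).
Proof.
  intro H; induction n.
  - replace (fun x => exists i, (i < 0)%nat /\ F i x) with (fun _ : X => False).
    apply m_empty. apply pext; intro x; split; [tauto| intros [i [Hi _]]; lia].
  - replace (fun x => exists i, (i < S n)%nat /\ F i x) with (fun x => (fun x => exists i, (i < n)%nat /\ F i x) x \/ F n x).
    apply m_union2; auto.
    apply pext; intro x; split.
    + intros [[i [Hi Hx]]|Hx]; [exists i; split; [lia|auto]| exists n; split; [lia|auto]].
    + intros [i [Hi Hx]]. destruct (Nat.eq_dec i n); [subst; auto| left; exists i; split; [lia|auto]].
Qed.

End Meas.

Definition cadd {X : Type} (gen : (X -> Prop) -> Prop) (mu : (X -> Prop) -> R) : Prop :=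
  (forall A, measurable gen A -> 0 <= mu A) /\
  (forall F : nat -> X -> Prop, (forall n, measurable gen (F n)) -> disj F ->
     infinite_sum (fun n => mu (F n)) (mu (fun x => exists n, F n x))).

Lemma prob_cadd {X : Type} gen (mu : (X -> Prop) -> R) : is_prob_measure gen mu -> cadd gen mu.
Proof. intros [H1 [H2 H3]]; split; auto. Qed.

Fixpoint fsum (f : nat -> R) (n : nat) : R :=
  match n with O => 0 | S n => fsum f n + f n end.

Lemma sum_f_fsum f n : sum_f_R0 f n = fsum f (S n).
Proof. induction n; simpl; [lra|]. rewrite IHn; simpl; lra. Qed.

Lemma infsum_eventually (f : nat -> R) M : (forall n, (n >= M)%nat -> f n = 0) -> infinite_sum f (fsum f M).
Proof.
  intros H eps Heps. exists M. intros n Hn.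
  assert (E : forall k, sum_f_R0 f (M + k) = fsum f M).
  { induction k.
    - destruct M. simpl. rewrite H by lia. simpl; lra.
      rewrite Nat.add_0_r, sum_f_fsum. simpl. rewrite (H (S M)) by lia. lra.
    - rewrite Nat.add_succ_r. simpl. rewrite IHk, (H (S (M + k))) by lia. lra. }
  replace n with (M + (n - M))%nat by lia. rewrite E. unfold Rdist. rewrite Rminus_diag, Rabs_R0. lra.
Qed.

Lemma fsum_ext f g n : (forall i, (i < n)%nat -> f i = g i) -> fsum f n = fsum g n.
Proof. induction n; simpl; intros; auto. rewrite IHn, H; auto. Qed.

Lemma fsum_plus f g n : fsum (fun i => f i + g i) n = fsum f n + fsum g n.
Proof. induction n; simpl; lra. Qed.

Lemma fsum_scal c f n : fsum (fun i => c * f i) n = c * fsum f n.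
Proof. induction n; simpl; [lra|]. rewrite IHn; lra. Qed.

Lemma fsum_split f a b : fsum f (a + b) = fsum f a + fsum (fun i => f (a + i)%nat) b.
Proof. induction b; simpl. rewrite Nat.add_0_r; lra. rewrite Nat.add_succ_r; simpl; rewrite IHb; lra. Qed.

Lemma fsum_const c n : fsum (fun _ => c) n = INR n * c.
Proof. induction n; simpl fsum; [simpl; lra|]. rewrite IHn, S_INR; lra. Qed.

Lemma fsum_single f n r : (r < n)%nat -> (forall i, i <> r -> f i = 0) -> fsum f n = f r.
Proof.
  intros Hr H. induction n; [lia|]. simpl.
  destruct (Nat.eq_dec r n).
  - subst. rewrite (fsum_ext _ (fun _ => 0)). 2:{ intros; apply H; lia. }
    rewrite fsum_const; lra.
  - rewrite IHn by lia. rewrite (H n) by auto. lra.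
Qed.

Lemma fsum_nonneg f n : (forall i, (i < n)%nat -> 0 <= f i) -> 0 <= fsum f n.
Proof. induction n; simpl; intros; [lra|]. assert (0 <= f n) by auto. assert (0 <= fsum f n) by auto. lra. Qed.



Section CaddFacts.
Context {X : Type} (gen : (X -> Prop) -> Prop) (mu : (X -> Prop) -> R) (Hmu : cadd gen mu).

Lemma cadd_empty : mu (fun _ => False) = 0.
Proof.
  destruct Hmu as [H1 H2].
  assert (Hs := H2 (fun _ _ => False) (fun _ => m_empty gen) ltac:(intros n m x _ Hx; destruct Hx)).
  cbv beta in Hs.
  replace (fun x : X => exists _ : nat, False) with (fun _ : X => False) in Hs by (apply pext; intro; split; [tauto|intros [_ []]]).
  assert (Hz := infsum_eventually (fun _ : nat => 0) 0 (fun n _ => eq_refl)).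
  simpl in Hz.
  set (c := mu (fun _ => False)) in *.
  assert (0 <= c) by (apply H1, m_empty).
  destruct (Rle_lt_or_eq_dec 0 c H) as [Hc|Hc]; [|auto].
  exfalso. destruct (Hs c Hc) as [N HN]. specialize (HN (S N) ltac:(lia)).
  rewrite sum_f_fsum, fsum_const in HN. unfold Rdist in HN.
  assert (0 <= INR N) by apply pos_INR.
  assert (0 <= INR N * c) by (apply Rmult_le_pos; lra).
  rewrite !S_INR in HN.
  replace ((INR N + 1 + 1) * c - c) with (INR N * c + c) in HN by ring.
  rewrite Rabs_right in HN; lra.
Qed.

Lemma cadd_finite (F : nat -> X -> Prop) n : (forall i, measurable gen (F i)) -> disj F ->
  mu (fun x => exists i, (i < n)%nat /\ F i x) = fsum (fun i => mu (F i)) n.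
Proof.
  intros Hm Hd. destruct Hmu as [H1 H2].
  set (G := fun i x => (i < n)%nat /\ F i x).
  assert (HG : forall i, measurable gen (G i)).
  { intro i; unfold G. apply m_inter2; [apply m_const|auto]. }
  assert (Hs := H2 G HG ltac:(intros a b x Hab [_ Ha] [_ Hb]; eapply Hd; eauto)).
  assert (Hz := infsum_eventually (fun i => mu (G i)) n).
  transitivity (mu (fun x => exists i, G i x)). { f_equal. }
  rewrite (uniqueness_sum _ _ _ Hs (Hz ltac:(intros i Hi; cbv beta; replace (G i) with (fun _ : X => False); [apply cadd_empty| apply pext; unfold G; intro; split; [tauto| lia]]))).
  apply fsum_ext. intros i Hi. f_equal. apply pext; unfold G; intuition.
Qed.

Lemma cadd_add2 A B : measurable gen A -> measurable gen B -> (forall x, A x -> B x -> False) ->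
  mu (fun x => A x \/ B x) = mu A + mu B.
Proof.
  intros HA HB Hd.
  set (F := fun i : nat => match i with O => A | 1%nat => B | _ => fun _ => False end).
  assert (E := cadd_finite F 2 ltac:(intros [|[|i]]; unfold F; simpl; auto; apply m_empty)
     ltac:(intros [|[|a]] [|[|b]] x Hab Ha Hb; unfold F in *; simpl in *; try congruence; try tauto; try exact (Hd x Ha Hb); exact (Hd x Hb Ha))).
  simpl in E. rewrite Rplus_0_l in E. rewrite <- E. f_equal. apply pext; intro x; split.
  - intros [H|H]; [exists O| exists 1%nat]; simpl; split; auto; lia.
  - intros [[|[|i]] [Hi H]]; unfold F in H; simpl in H; auto. lia.
Qed.

Lemma cadd_compl A : measurable gen A -> mu (fun x => ~ A x) = mu (fun _ => True) - mu A.
Proof.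
  intros HA. assert (E := cadd_add2 A (fun x => ~ A x) HA (m_compl gen A HA) ltac:(auto)).
  cbv beta in E.
  replace (fun x => A x \/ ~ A x) with (fun _ : X => True) in E by (apply pext; intro x; split; auto; intros; apply classic).
  lra.
Qed.

Lemma cadd_mono A B : measurable gen A -> measurable gen B -> (forall x, A x -> B x) -> mu A <= mu B.
Proof.
  intros HA HB Hs.
  assert (E := cadd_add2 A (fun x => B x /\ ~ A x) HA (m_inter2 gen _ _ HB (m_compl gen A HA)) ltac:(intros x H1 [_ H2]; exact (H2 H1))).
  cbv beta in E.
  replace (fun x => A x \/ (B x /\ ~ A x)) with B in E.
  - destruct Hmu as [H1 _]. assert (0 <= mu (fun x => B x /\ ~ A x)) by (apply H1, m_inter2, m_compl; auto). lra.
  - apply pext; intro x; split; [intro; destruct (classic (A x)); auto | intros [H|[H _]]; auto].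
Qed.

End CaddFacts.


Section Dynkin.
Context {X : Type} (C : (X -> Prop) -> Prop).

Inductive dyn : (X -> Prop) -> Prop :=
| d_base : forall A, C A -> dyn A
| d_full : dyn (fun _ => True)
| d_compl : forall A, dyn A -> dyn (fun x => ~ A x)
| d_union : forall F : nat -> X -> Prop, (forall n, dyn (F n)) -> disj F -> dyn (fun x => exists n, F n x).

Lemma dyn_ext A B : dyn A -> (forall x, A x <-> B x) -> dyn B.
Proof. intros H E; replace B with A; auto; apply pext; auto. Qed.

Lemma dyn_empty : dyn (fun _ => False).
Proof. apply dyn_ext with (fun x => ~ (fun _ => True) x). apply d_compl, d_full. intuition. Qed.

Lemma dyn_union2 A B : dyn A -> dyn B -> (forall x, A x -> B x -> False) -> dyn (fun x => A x \/ B x).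
Proof.
  intros HA HB Hd.
  set (F := fun i : nat => match i with O => A | 1%nat => B | _ => fun _ => False end).
  apply dyn_ext with (fun x => exists n, F n x).
  - apply d_union.
    + intros [|[|i]]; unfold F; auto. apply dyn_empty.
    + intros [|[|a]] [|[|b]] x Hab Ha Hb; unfold F in *; simpl in *; try congruence; try tauto; try exact (Hd x Ha Hb); exact (Hd x Hb Ha).
  - intro x; split.
    + intros [[|[|i]] H]; unfold F in H; auto. destruct H.
    + intros [H|H]; [exists O | exists 1%nat]; auto.
Qed.

Hypothesis CI : forall A B, C A -> C B -> C (fun x => A x /\ B x).

Lemma dyn_inter_C A B : C A -> dyn B -> dyn (fun x => A x /\ B x).
Proof.
  intros HA HB; induction HB as [B HB| |B HB IH|F HF IH Hd].
  - apply d_base, CI; auto.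
  - apply dyn_ext with A. apply d_base; auto. intuition.
  - (* A /\ ~B = ~ (~A \/ (A /\ B)) *)
    apply dyn_ext with (fun x => ~ (fun x => (fun x => ~ A x) x \/ (fun x => A x /\ B x) x) x).
    + apply d_compl, dyn_union2; [apply d_compl, d_base; auto | auto | intros x H1 [H2 _]; auto].
    + intro x; split.
      * intro H; split; apply NNPP; intro H'; apply H; [left; auto| right; split; auto; apply NNPP; auto].
      * intros [H1 H2] [H|[_ H]]; auto.
  - apply dyn_ext with (fun x => exists n, (fun n x => A x /\ F n x) n x).
    + apply d_union; auto. intros n m x Hnm [_ H1] [_ H2]; eapply Hd; eauto.
    + intro x; split; [intros [n [H1 H2]]; split; [|exists n]; auto | intros [H1 [n H2]]; exists n; auto].
Qed.

Lemma dyn_inter A B : dyn A -> dyn B -> dyn (fun x => A x /\ B x).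
Proof.
  intros HA HB; revert B HB; induction HA as [A HA| |A HA IH|F HF IH Hd]; intros B HB.
  - apply dyn_inter_C; auto.
  - apply dyn_ext with B; auto. intuition.
  - (* ~A /\ B = ~ (~B \/ (A /\ B)) *)
    apply dyn_ext with (fun x => ~ (fun x => (fun x => ~ B x) x \/ (fun x => A x /\ B x) x) x).
    + apply d_compl, dyn_union2; [apply d_compl; auto | auto | intros x H1 [_ H2]; auto].
    + intro x; split.
      * intro H; split; apply NNPP; intro H'; apply H; [right; split; auto; apply NNPP; auto | left; auto].
      * intros [H1 H2] [H|[H _]]; auto.
  - apply dyn_ext with (fun x => exists n, (fun n x => F n x /\ B x) n x).
    + apply d_union; auto. intros n m x Hnm [H1 _] [H2 _]; eapply Hd; eauto.
    + intro x; split; [intros [n [H1 H2]]; split; [exists n|]; auto | intros [[n H1] H2]; exists n; auto].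
Qed.

Lemma dyn_or A B : dyn A -> dyn B -> dyn (fun x => A x \/ B x).
Proof.
  intros HA HB. apply dyn_ext with (fun x => ~ (fun x => (fun x => ~ A x) x /\ (fun x => ~ B x) x) x).
  - apply d_compl, dyn_inter; apply d_compl; auto.
  - intro x; split.
    + intro H; apply NNPP; intro H'; apply H; split; intro; apply H'; auto.
    + intros [H|H] [H1 H2]; auto.
Qed.

Lemma dyn_finunion (F : nat -> X -> Prop) n : (forall i, dyn (F i)) -> dyn (fun x => exists i, (i < n)%nat /\ F i x).
Proof.
  intro H; induction n.
  - apply dyn_ext with (fun _ => False). apply dyn_empty. intro x; split; [tauto| intros [i [Hi _]]; lia].
  - apply dyn_ext with (fun x => (fun x => exists i, (i < n)%nat /\ F i x) x \/ F n x).
    apply dyn_or; auto.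
    intro x; split.
    + intros [[i [Hi Hx]]|Hx]; [exists i; split; [lia|auto]| exists n; split; [lia|auto]].
    + intros [i [Hi Hx]]. destruct (Nat.eq_dec i n); [subst; auto| left; exists i; split; [lia|auto]].
Qed.

Lemma dyn_cunion (F : nat -> X -> Prop) : (forall i, dyn (F i)) -> dyn (fun x => exists n, F n x).
Proof.
  intro H.
  apply dyn_ext with (fun x => exists n, (fun n x => F n x /\ ~ (exists i, (i < n)%nat /\ F i x)) n x).
  - apply d_union.
    + intro n. apply dyn_inter; auto. apply d_compl, dyn_finunion; auto.
    + intros n m x Hnm [H1 H2] [H3 H4].
      destruct (Nat.lt_total n m) as [Hlt|[Heq|Hlt]]; [apply H4; exists n; auto | auto | apply H2; exists m; auto].
  - intro x; split.
    + intros [n [Hn _]]; exists n; auto.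
    + intros Hex.
      assert (Hmin : forall k, (forall n, (n <= k)%nat -> F n x -> exists m, F m x /\ ~ (exists i, (i < m)%nat /\ F i x))).
      { induction k; intros n Hn Hx.
        - exists n; split; auto. intros [i [Hi _]]; lia.
        - destruct (classic (exists i, (i < n)%nat /\ F i x)) as [[i [Hi Hxi]]|Hno].
          + apply (IHk i); auto; lia.
          + exists n; auto. }
      destruct Hex as [n Hn]. destruct (Hmin n n (le_n n) Hn) as [m Hm]. exists m; auto.
Qed.

Lemma dyn_measurable (gen : (X -> Prop) -> Prop) A :
  (forall G, gen G -> dyn G) -> measurable gen A -> dyn A.
Proof.
  intros Hg HA; induction HA.
  - auto.
  - apply d_full.
  - apply d_compl; auto.
  - apply dyn_cunion; auto.
Qed.

End Dynkin.

Lemma meas_mono {X : Type} (g1 g2 : (X -> Prop) -> Prop) A :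
  (forall G, g1 G -> measurable g2 G) -> measurable g1 A -> measurable g2 A.
Proof.
  intros H HA; induction HA.
  - auto.
  - apply meas_full.
  - apply meas_compl; auto.
  - apply meas_union; auto.
Qed.

Theorem pi_lambda {X : Type} (gen C : (X -> Prop) -> Prop) (mu1 mu2 : (X -> Prop) -> R) :
  cadd gen mu1 -> cadd gen mu2 ->
  (forall A B, C A -> C B -> C (fun x => A x /\ B x)) ->
  (forall A, C A -> measurable gen A) ->
  (forall G, gen G -> measurable C G) ->
  mu1 (fun _ => True) = mu2 (fun _ => True) ->
  (forall A, C A -> mu1 A = mu2 A) ->
  forall A, measurable gen A -> mu1 A = mu2 A.
Proof.
  intros H1 H2 CI CM GC Hfull Hagree A HA.
  assert (HD : dyn C A).
  { apply (dyn_measurable C CI C); [intros; apply d_base; auto|].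
    apply (meas_mono gen C); auto. }
  cut (measurable gen A /\ mu1 A = mu2 A); [tauto|].
  clear HA. induction HD as [A HA| |A HA IH|F HF IH Hd].
  - split; auto.
  - split; auto. apply meas_full.
  - destruct IH as [IHm IHe]. split. apply meas_compl; auto.
    rewrite (cadd_compl gen mu1 H1 A IHm), (cadd_compl gen mu2 H2 A IHm). lra.
  - split. apply meas_union; intro n; apply IH.
    apply (uniqueness_sum (fun n => mu1 (F n))).
    + apply H1; auto. intro n; apply IH.
    + replace (fun n => mu1 (F n)) with (fun n => mu2 (F n)).
      apply H2; auto. intro n; apply IH.
      apply functional_extensionality; intro n; symmetry; apply IH.
Qed.


Section Coords.
Context {X K : Type} (gen : (X -> Prop) -> Prop) (ev : X -> K -> bool) (upd : X -> K -> bool -> X).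
Hypothesis upd_eq : forall x k b, ev (upd x k b) k = b.
Hypothesis upd_neq : forall x k b k', k <> k' -> ev (upd x k b) k' = ev x k'.
Hypothesis genm : forall k b, measurable gen (fun x => ev x k = b).

Lemma local_meas (L : list K) : forall E : X -> Prop,
  (forall x y, (forall k, In k L -> ev x k = ev y k) -> E x -> E y) -> measurable gen E.
Proof.
  induction L as [|k L IH]; intros E HE.
  - destruct (classic (exists x, E x)) as [[x0 Hx0]|Hno].
    + replace E with (fun _ : X => True). apply meas_full.
      apply pext; intro y; split; auto. intros _. apply (HE x0 y); simpl; auto. tauto.
    + replace E with (fun _ : X => False). apply m_empty.
      apply pext; intro y; split; [tauto|]. intro; apply Hno; eauto.
  - assert (Hb : forall b, measurable gen (fun x => ev x k = b /\ E (upd x k b))).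
    { intro b. apply m_inter2; auto. apply IH.
      intros x y Hxy Hx. apply (HE (upd x k b)); auto.
      intros k' [Hk'|Hk'].
      + subst. rewrite !upd_eq; auto.
      + destruct (classic (k = k')) as [e|ne].
        * subst; rewrite !upd_eq; auto.
        * rewrite !upd_neq; auto. }
    replace E with (fun x => (fun x => ev x k = true /\ E (upd x k true)) x \/ (fun x => ev x k = false /\ E (upd x k false)) x).
    + apply m_union2; auto.
    + assert (Hsame : forall x, E x <-> E (upd x k (ev x k))).
      { intro x; split; apply HE; intros k' _; destruct (classic (k = k')) as [e|ne];
          try (subst; rewrite upd_eq; auto); rewrite upd_neq; auto. }
      apply pext; intro x; split.
      * intros [[H1 H2]|[H1 H2]]; apply Hsame; rewrite H1; auto.
      * intro Hx. destruct (ev x k) eqn:Hk; [left|right]; split; auto; rewrite <- Hk; apply (proj1 (Hsame x)); auto.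
Qed.
End Coords.

Definition updZ (w : bseqZ) (z : Z) (b : bool) : bseqZ := fun z' => if Z.eq_dec z z' then b else w z'.

Lemma genZ_meas z b : measurable genZ (fun w : bseqZ => w z = b).
Proof. apply meas_gen. exists z, b. intro; tauto. Qed.

Definition windowZ (N : nat) : list Z := map (fun i => (Z.of_nat i - Z.of_nat N)%Z) (seq 0 (2 * N + 1)).

Lemma in_windowZ N z : (- Z.of_nat N <= z <= Z.of_nat N)%Z -> In z (windowZ N).
Proof.
  intro H. unfold windowZ. apply in_map_iff. exists (Z.to_nat (z + Z.of_nat N)). split.
  - lia.
  - apply in_seq. lia.
Qed.

Definition locZ (N : nat) (B : bseqZ -> Prop) : Prop :=
  forall w w', (forall z, (- Z.of_nat N <= z <= Z.of_nat N)%Z -> w z = w' z) -> B w -> B w'.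

Lemma locZ_meas N B : locZ N B -> measurable genZ B.
Proof.
  intro H. apply (local_meas genZ (fun w z => w z) updZ) with (windowZ N).
  - intros; unfold updZ; destruct (Z.eq_dec k k); congruence.
  - intros; unfold updZ; destruct (Z.eq_dec k k'); congruence.
  - apply genZ_meas.
  - intros x y Hxy. apply H. intros z Hz. apply Hxy, in_windowZ; auto.
Qed.

Lemma locZ_mono N M B : (N <= M)%nat -> locZ N B -> locZ M B.
Proof. intros HNM H w w' Hw. apply H. intros z Hz; apply Hw; lia. Qed.

Definition evP (p : XProd) (c : Z + nat) : bool :=
  match c with inl z => fst p z | inr i => snd p i end.
Definition updP (p : XProd) (c : Z + nat) (b : bool) : XProd :=
  match c with
  | inl z => (updZ (fst p) z b, snd p)
  | inr i => (fst p, fun i' => if Nat.eq_dec i i' then b else snd p i')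
  end.

Lemma genP_meas c b : measurable genProd (fun p => evP p c = b).
Proof.
  apply meas_gen. destruct c as [z|i]; [left; exists z, b | right; exists i, b]; simpl; tauto.
Qed.

Lemma localP_meas (L : list (Z + nat)) E :
  (forall x y, (forall k, In k L -> evP x k = evP y k) -> E x -> E y) -> measurable genProd E.
Proof.
  apply (local_meas genProd evP updP).
  - intros x [z|i] b; simpl; unfold updZ; [destruct (Z.eq_dec z z)|destruct (Nat.eq_dec i i)]; congruence.
  - intros x [z|i] b [z'|i'] H; simpl; auto; unfold updZ.
    + destruct (Z.eq_dec z z'); congruence.
    + destruct (Nat.eq_dec i i'); congruence.
  - apply genP_meas.
Qed.

Definition loc (N : nat) (E : XProd -> Prop) : Prop :=
  forall p q, (forall z, (- Z.of_nat N <= z <= Z.of_nat N)%Z -> fst p z = fst q z) ->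
    (forall i, (i < N)%nat -> snd p i = snd q i) -> E p -> E q.

Lemma loc_meas N E : loc N E -> measurable genProd E.
Proof.
  intro H. apply localP_meas with (map inl (windowZ N) ++ map inr (seq 0 N)).
  intros x y Hxy. apply H.
  - intros z Hz. apply (Hxy (inl z)). apply in_or_app; left. apply in_map, in_windowZ; auto.
  - intros i Hi. apply (Hxy (inr i)). apply in_or_app; right. apply in_map, in_seq; lia.
Qed.

Lemma loc_mono N M E : (N <= M)%nat -> loc N E -> loc M E.
Proof. intros HNM H p q H1 H2. apply H; [intros z Hz; apply H1; lia | intros i Hi; apply H2; lia]. Qed.

Definition locN (N : nat) (P : bseqN -> Prop) : Prop :=
  forall a a', (forall i, (i < N)%nat -> a i = a' i) -> P a -> P a'.

Lemma locN_meas N P : locN N P -> measurable genProd (fun p => P (snd p)).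
Proof.
  intro H. apply localP_meas with (map inr (seq 0 N)).
  intros x y Hxy. apply H. intros i Hi. apply (Hxy (inr i)). apply in_map, in_seq; lia.
Qed.

Lemma shiftn_meas n B : measurable genZ B -> measurable genZ (fun w => B (shiftn n w)).
Proof.
  intro HB; induction HB as [A [z [b HA]]| |A HA IH|F HF IH].
  - replace (fun w => A (shiftn n w)) with (fun w : bseqZ => w (z + Z.of_nat n)%Z = b).
    apply genZ_meas. apply pext; intro w; rewrite HA; unfold shiftn; tauto.
  - apply meas_full.
  - apply meas_compl; auto.
  - apply meas_union; auto.
Qed.

Lemma fst_meas B : measurable genZ B -> measurable genProd (fun p => B (fst p)).
Proof.
  intro HB; induction HB as [A [z [b HA]]| |A HA IH|F HF IH].
  - replace (fun p : XProd => A (fst p)) with (fun p => evP p (inl z) = b).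
    apply genP_meas. apply pext; intro p; rewrite HA; simpl; tauto.
  - apply meas_full.
  - apply meas_compl; auto.
  - apply meas_union; auto.
Qed.

Lemma forallb_local (a a' : bseqN) l : (forall j, In j l -> a j = a' j) -> forallb a l = forallb a' l.
Proof. induction l; simpl; intros; auto. rewrite H, IHl; auto. Qed.

Lemma odometer_local (a a' : bseqN) i : (forall j, (j <= i)%nat -> a j = a' j) -> odometer a i = odometer a' i.
Proof.
  intro H. unfold odometer. rewrite (forallb_local a a' (seq 0 i)).
  - rewrite H; auto.
  - intros j Hj; apply in_seq in Hj; apply H; lia.
Qed.

Lemma SxO_meas E : measurable genProd E -> measurable genProd (fun p => E (SxO p)).
Proof.
  intro HE; induction HE as [A [[z [b HA]]|[i [b HA]]]| |A HA IH|F HF IH].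
  - replace (fun p => A (SxO p)) with (fun p => evP p (inl (z + 1)%Z) = b).
    apply genP_meas. apply pext; intro p; rewrite HA; simpl; unfold Defs.shift, shiftn; simpl; tauto.
  - replace (fun p => A (SxO p)) with (fun p : XProd => odometer (snd p) i = b).
    + apply localP_meas with (map inr (seq 0 (S i))).
      intros x y Hxy H. rewrite <- H. apply odometer_local. intros j Hj.
      symmetry. apply (Hxy (inr j)). apply in_map, in_seq; lia.
    + apply pext; intro p; rewrite HA; simpl; tauto.
  - apply meas_full.
  - apply meas_compl; auto.
  - apply meas_union; auto.
Qed.

Lemma iterSxO_meas n E : measurable genProd E -> measurable genProd (fun p => E (Nat.iter n SxO p)).
Proof.
  revert E; induction n; intros E HE; simpl; auto.
  apply (IHn (fun p => E (SxO p))). apply SxO_meas; auto.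
Qed.

Lemma bin_val_S a k : bin_val a (S k) = (bin_val a k + (if a k then 2 ^ k else 0))%nat.
Proof. reflexivity. Qed.

Lemma bin_val_lt a k : (bin_val a k < 2 ^ k)%nat.
Proof. induction k; simpl; [lia|]. destruct (a k); lia. Qed.

Lemma bin_val_local a a' k : (forall i, (i < k)%nat -> a i = a' i) -> bin_val a k = bin_val a' k.
Proof. induction k; intros H; simpl; auto. rewrite IHk by (intros; apply H; lia). rewrite H by lia. auto. Qed.

Lemma bin_val_ext a k k' : (k <= k')%nat -> exists q, bin_val a k' = (bin_val a k + 2 ^ k * q)%nat.
Proof.
  intro H; induction H.
  - exists 0%nat; lia.
  - destruct IHle as [q Hq]. rewrite bin_val_S, Hq.
    destruct (a m).
    + exists (q + 2 ^ (m - k))%nat. rewrite Nat.mul_add_distr_l, <- Nat.pow_add_r.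
      replace (k + (m - k))%nat with m by lia. lia.
    + exists q; lia.
Qed.

Lemma bin_val_mod a k k' : (k <= k')%nat -> (bin_val a k' mod 2 ^ k = bin_val a k)%nat.
Proof.
  intro H. destruct (bin_val_ext a k k' H) as [q Hq]. rewrite Hq.
  rewrite Nat.mul_comm, Nat.Div0.mod_add. apply Nat.mod_small, bin_val_lt.
Qed.

Lemma pow2_pos k : (2 ^ k <> 0)%nat.
Proof. apply Nat.pow_nonzero; lia. Qed.

Lemma bin_val_bits r k : bin_val (fun i => Nat.testbit r i) k = (r mod 2 ^ k)%nat.
Proof.
  induction k.
  - change (0%nat = r mod 2 ^ 0)%nat. rewrite Nat.pow_0_r, Nat.mod_1_r. reflexivity.
  - rewrite bin_val_S, IHk. rewrite Nat.pow_succ_r', (Nat.mul_comm 2 (2 ^ k)), Nat.Div0.mod_mul_r.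
    assert (Hb := Nat.testbit_spec' r k). destruct (Nat.testbit r k); cbn [Nat.b2n] in Hb; rewrite <- Hb; lia.
Qed.

Lemma bin_val_top a i : a i = Nat.leb (2 ^ i) (bin_val a (S i)).
Proof.
  rewrite bin_val_S. assert (H := bin_val_lt a i).
  destruct (a i); symmetry; [apply Nat.leb_le | apply Nat.leb_gt]; lia.
Qed.

Lemma forallb_seq_S (a : bseqN) k : forallb a (seq 0 (S k)) = (forallb a (seq 0 k) && a k)%bool.
Proof. rewrite seq_S, forallb_app. simpl. destruct (a k); destruct (forallb a (seq 0 k)); auto. Qed.

Lemma odometer_bin_aux a k :
  (if forallb a (seq 0 k) then bin_val (odometer a) k = 0%nat /\ bin_val a k = (2 ^ k - 1)%nat
   else bin_val (odometer a) k = S (bin_val a k) /\ (S (bin_val a k) < 2 ^ k)%nat).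
Proof.
  induction k.
  - simpl. lia.
  - rewrite forallb_seq_S, !bin_val_S.
    assert (Ho : odometer a k = if forallb a (seq 0 k) then negb (a k) else a k) by reflexivity.
    rewrite Ho. assert (Hp : (2 ^ S k = 2 * 2 ^ k)%nat) by reflexivity. rewrite Hp.
    assert (Hpos := pow2_pos k).
    destruct (forallb a (seq 0 k)); destruct IHk as [H1 H2]; destruct (a k); simpl; lia.
Qed.

Lemma odometer_bin a k : bin_val (odometer a) k = ((bin_val a k + 1) mod 2 ^ k)%nat.
Proof.
  assert (H := odometer_bin_aux a k). assert (Hpos := pow2_pos k).
  destruct (forallb a (seq 0 k)); destruct H as [H1 H2].
  - rewrite H1, H2. replace (2 ^ k - 1 + 1)%nat with (2 ^ k)%nat by lia. symmetry; apply Nat.Div0.mod_same.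
  - rewrite H1. symmetry. rewrite Nat.mod_small; lia.
Qed.

Lemma oditer_bin n a k : bin_val (Nat.iter n odometer a) k = ((bin_val a k + n) mod 2 ^ k)%nat.
Proof.
  induction n.
  - simpl. rewrite Nat.add_0_r. symmetry. apply Nat.mod_small, bin_val_lt.
  - simpl. rewrite odometer_bin, IHn. rewrite Nat.Div0.add_mod_idemp_l. f_equal. lia.
Qed.



Lemma shiftn_add m n w : shiftn m (shiftn n w) = shiftn (m + n) w.
Proof. unfold shiftn. apply functional_extensionality; intro j. f_equal. lia. Qed.

Lemma shiftn_0 w : shiftn 0 w = w.
Proof. unfold shiftn. apply functional_extensionality; intro j. f_equal. lia. Qed.

Lemma iterSxO n p : Nat.iter n SxO p = (shiftn n (fst p), Nat.iter n odometer (snd p)).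
Proof.
  induction n.
  - destruct p as [w a]. change (Nat.iter 0 SxO (w,a)) with (w,a). change (Nat.iter 0 odometer a) with a.
    cbn [fst snd]. rewrite shiftn_0. reflexivity.
  - change (Nat.iter (S n) SxO p) with (SxO (Nat.iter n SxO p)).
    change (Nat.iter (S n) odometer (snd p)) with (odometer (Nat.iter n odometer (snd p))).
    rewrite IHn. unfold SxO. cbn [fst snd]. unfold Defs.shift. rewrite shiftn_add. reflexivity.
Qed.

Lemma A_rk_loc r k : locN k (A_rk r k).
Proof. intros a a' H Ha. unfold A_rk in *. rewrite <- (bin_val_local a a' k H). auto. Qed.

Lemma A_rk_meas r k : measurable genProd (fun p => A_rk r k (snd p)).
Proof. apply locN_meas with k. apply A_rk_loc. Qed.

Lemma rect_meas B (P : bseqN -> Prop) k : measurable genZ B -> locN k P ->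
  measurable genProd (fun p => B (fst p) /\ P (snd p)).
Proof. intros HB HP. apply m_inter2. apply fst_meas; auto. apply locN_meas with k; auto. Qed.


Definition rectC (E : XProd -> Prop) : Prop :=
  exists B k r, measurable genZ B /\ (r < 2 ^ k)%nat /\ E = (fun p => B (fst p) /\ A_rk r k (snd p)).

Lemma A_rk_inter a r1 k1 r2 k2 : (k1 <= k2)%nat ->
  (A_rk r1 k1 a /\ A_rk r2 k2 a <-> (r2 mod 2 ^ k1 = r1)%nat /\ A_rk r2 k2 a).
Proof.
  intro H. unfold A_rk. rewrite <- (bin_val_mod a k1 k2 H). split.
  - intros [H1 H2]. rewrite H2 in H1. auto.
  - intros [H1 H2]. rewrite H2. auto.
Qed.

Lemma rectC_inter_aux B1 k1 r1 B2 k2 r2 : measurable genZ B1 -> measurable genZ B2 ->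
  (r1 < 2 ^ k1)%nat -> (r2 < 2 ^ k2)%nat -> (k1 <= k2)%nat ->
  rectC (fun p => (B1 (fst p) /\ A_rk r1 k1 (snd p)) /\ (B2 (fst p) /\ A_rk r2 k2 (snd p))).
Proof.
  intros HB1 HB2 Hr1 Hr2 Hk.
  destruct (Nat.eq_dec (r2 mod 2 ^ k1) r1) as [e|ne].
  - exists (fun w => B1 w /\ B2 w), k2, r2. split; [apply m_inter2; auto|split; auto].
    apply pext; intro p. assert (HH := A_rk_inter (snd p) r1 k1 r2 k2 Hk). tauto.
  - exists (fun _ => False), 0%nat, 0%nat. split; [apply m_empty|split; [simpl; lia|]].
    apply pext; intro p. assert (HH := A_rk_inter (snd p) r1 k1 r2 k2 Hk). tauto.
Qed.

Lemma rectC_inter A B : rectC A -> rectC B -> rectC (fun x => A x /\ B x).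
Proof.
  intros [B1 [k1 [r1 [HB1 [Hr1 ->]]]]] [B2 [k2 [r2 [HB2 [Hr2 ->]]]]].
  destruct (le_ge_dec k1 k2) as [Hk|Hk].
  - apply rectC_inter_aux; auto.
  - destruct (rectC_inter_aux B2 k2 r2 B1 k1 r1 HB2 HB1 Hr2 Hr1 Hk) as [B [k [r [H1 [H2 H3]]]]].
    exists B, k, r. split; auto. split; auto. rewrite <- H3. apply pext; intro; tauto.
Qed.

Lemma rectC_meas E : rectC E -> measurable genProd E.
Proof. intros [B [k [r [HB [Hr ->]]]]]. apply rect_meas with k; auto. apply A_rk_loc. Qed.

Lemma gen_rectC G : genProd G -> measurable rectC G.
Proof.
  intros [[z [b HG]]|[i [b HG]]].
  - apply meas_gen. exists (fun w => w z = b), 0%nat, 0%nat. split; [apply genZ_meas|split; [simpl; lia|]].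
    apply pext; intro p. rewrite HG. unfold A_rk; simpl. tauto.
  - set (H := fun n : nat => if (Nat.ltb n (2 ^ S i) && Bool.eqb (Nat.leb (2 ^ i) n) b)%bool
                           then (fun p : XProd => (fun _ : bseqZ => True) (fst p) /\ A_rk n (S i) (snd p))
                           else (fun p : XProd => (fun _ : bseqZ => False) (fst p) /\ A_rk 0 0 (snd p))).
    replace G with (fun p => exists n, H n p).
    + apply meas_union. intro n. apply meas_gen. unfold H.
      destruct (Nat.ltb n (2 ^ S i) && Bool.eqb (Nat.leb (2 ^ i) n) b)%bool eqn:E.
      * apply Bool.andb_true_iff in E. destruct E as [E1 _]. apply Nat.ltb_lt in E1.
        exists (fun _ => True), (S i), n. split; [apply m_full | auto].
      * exists (fun _ => False), 0%nat, 0%nat. split; [apply m_empty| split; [simpl; lia|auto]].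
    + apply pext; intro p. rewrite HG. split.
      * intros [n Hn]. unfold H in Hn.
        destruct (Nat.ltb n (2 ^ S i) && Bool.eqb (Nat.leb (2 ^ i) n) b)%bool eqn:E.
        -- destruct Hn as [_ Hn]. unfold A_rk in Hn. apply Bool.andb_true_iff in E. destruct E as [_ E2].
           apply Bool.eqb_prop in E2. rewrite <- Hn in E2. rewrite <- bin_val_top in E2. auto.
        -- destruct Hn as [[] _].
      * intro Hp. exists (bin_val (snd p) (S i)). unfold H.
        assert (E : (Nat.ltb (bin_val (snd p) (S i)) (2 ^ S i) && Bool.eqb (Nat.leb (2 ^ i) (bin_val (snd p) (S i))) b)%bool = true).
        { apply Bool.andb_true_iff. split. apply Nat.ltb_lt, bin_val_lt.
          rewrite <- bin_val_top, Hp. apply Bool.eqb_reflx. }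
        rewrite E. split; auto. reflexivity.
Qed.

Theorem rect_unique (mu1 mu2 : (XProd -> Prop) -> R) :
  cadd genProd mu1 -> cadd genProd mu2 ->
  (forall B k r, measurable genZ B -> (r < 2 ^ k)%nat ->
     mu1 (fun p => B (fst p) /\ A_rk r k (snd p)) = mu2 (fun p => B (fst p) /\ A_rk r k (snd p))) ->
  meas_eq genProd mu1 mu2.
Proof.
  intros H1 H2 Hag A HA.
  apply (pi_lambda genProd rectC mu1 mu2 H1 H2 rectC_inter rectC_meas gen_rectC); auto.
  - replace (fun _ : XProd => True) with (fun p : XProd => (fun _ : bseqZ => True) (fst p) /\ A_rk 0 0 (snd p)).
    apply (Hag (fun _ => True) 0%nat 0%nat). apply m_full. simpl; lia.
    apply pext; intro p; unfold A_rk; simpl; tauto.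
  - intros E [B [k [r [HB [Hr ->]]]]]. apply Hag; auto.
Qed.

Lemma mod_shift_eq x r m : (x < m)%nat -> (r < m)%nat -> ((x + r) mod m = r <-> x = 0)%nat.
Proof.
  intros Hx Hr. destruct (lt_dec (x + r) m).
  - rewrite Nat.mod_small by lia. lia.
  - replace (x + r)%nat with ((x + r - m) + 1 * m)%nat by lia. rewrite Nat.Div0.mod_add, Nat.mod_small by lia. lia.
Qed.

Lemma pow2_R_pos k : 0 < 2 ^ k.
Proof. apply pow_lt; lra. Qed.

Lemma INR_pow2 k : INR (2 ^ k) = 2 ^ k.
Proof. rewrite pow_INR. reflexivity. Qed.

Section InM.
Variable nu : (XProd -> Prop) -> R.
Hypothesis Hnu : inM nu.

Lemma M_cadd : cadd genProd nu.
Proof. destruct Hnu as [Hp _]. apply prob_cadd; auto. Qed.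

Lemma M_full : nu (fun _ => True) = 1.
Proof. destruct Hnu as [[_ [H _]] _]. auto. Qed.

Lemma M_iter n E : measurable genProd E -> nu (fun p => E (Nat.iter n SxO p)) = nu E.
Proof.
  revert E; induction n; intros E HE.
  - reflexivity.
  - change (nu (fun p => E (Nat.iter (S n) SxO p))) with (nu (fun p => (fun q => E (SxO q)) (Nat.iter n SxO p))).
    rewrite IHn by (apply SxO_meas; auto).
    destruct Hnu as [_ Hinv]. apply (Hinv E HE).
Qed.

Lemma M_G B k r n : measurable genZ B ->
  nu (fun p => B (shiftn n (fst p)) /\ ((bin_val (snd p) k + n) mod 2 ^ k = r)%nat) =
  nu (fun p => B (fst p) /\ A_rk r k (snd p)).
Proof.
  intro HB. rewrite <- (M_iter n (fun p => B (fst p) /\ A_rk r k (snd p))) by (apply rect_meas with k; auto; apply A_rk_loc).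
  f_equal. apply pext; intro p. rewrite iterSxO. unfold A_rk. cbn [fst snd]. rewrite oditer_bin. tauto.
Qed.

Lemma M_rect0 B k r : measurable genZ B -> (r < 2 ^ k)%nat ->
  nu (fun p => B (fst p) /\ A_rk r k (snd p)) = nu (fun p => B (shiftn r (fst p)) /\ A_rk 0 k (snd p)).
Proof.
  intros HB Hr. rewrite <- (M_G B k r r HB). f_equal. apply pext; intro p. unfold A_rk.
  rewrite (mod_shift_eq _ _ _ (bin_val_lt (snd p) k) Hr). tauto.
Qed.

Lemma M_Aeq k r : (r < 2 ^ k)%nat -> nu (fun p => A_rk r k (snd p)) = nu (fun p => A_rk 0 k (snd p)).
Proof.
  intros Hr. assert (H := M_rect0 (fun _ => True) k r (m_full _) Hr). cbv beta in H.
  transitivity (nu (fun p => True /\ A_rk r k (snd p))). { f_equal; apply pext; intros; tauto. }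
  rewrite H. f_equal. apply pext; intros; tauto.
Qed.

Lemma M_A k : nu (fun p => A_rk 0 k (snd p)) = / 2 ^ k.
Proof.
  assert (Hc := M_cadd).
  assert (E := M_Aeq k).
  assert (Hf := cadd_finite genProd nu Hc (fun r p => A_rk r k (snd p)) (2 ^ k) (fun r => A_rk_meas r k)
     ltac:(intros n m x Hnm H1 H2; unfold A_rk in *; congruence)).
  cbv beta in Hf.
  replace (fun x : XProd => exists i, (i < 2 ^ k)%nat /\ A_rk i k (snd x)) with (fun _ : XProd => True) in Hf.
  2:{ apply pext; intro p; split; auto. intros _. exists (bin_val (snd p) k). split; [apply bin_val_lt|reflexivity]. }
  rewrite M_full in Hf. rewrite (fsum_ext _ (fun _ => nu (fun p => A_rk 0 k (snd p)))) in Hf by auto.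
  rewrite fsum_const, INR_pow2 in Hf. assert (Hp := pow2_R_pos k).
  apply (Rmult_eq_reg_l (2 ^ k)); [|lra]. rewrite <- Hf. field. lra.
Qed.

Lemma M_Ar k r : (r < 2 ^ k)%nat -> nu (fun p => A_rk r k (snd p)) = / 2 ^ k.
Proof. intro Hr. rewrite M_Aeq by auto. apply M_A. Qed.

Lemma M_theta k X : theta k nu X = 2 ^ k * nu (fun p => X (fst p) /\ A_rk 0 k (snd p)).
Proof.
  unfold theta, P_rk. rewrite M_A. assert (Hp := pow2_R_pos k). field. lra.
Qed.

Lemma M_rect B k r : measurable genZ B -> (r < 2 ^ k)%nat ->
  nu (fun p => B (fst p) /\ A_rk r k (snd p)) = / 2 ^ k * theta k nu (fun w => B (shiftn r w)).
Proof.
  intros HB Hr. rewrite M_theta, M_rect0 by auto. assert (Hp := pow2_R_pos k). field. lra.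
Qed.

Lemma M_P B k r : measurable genZ B -> (r < 2 ^ k)%nat ->
  P_rk r k nu B = theta k nu (fun w => B (shiftn r w)).
Proof.
  intros HB Hr. unfold P_rk at 1. rewrite (M_rect B k r) by auto. rewrite M_Ar by auto.
  assert (Hp := pow2_R_pos k). field. lra.
Qed.

Lemma M_rel1 k : meas_eq genZ (shift_meas (2 ^ k) (theta k nu)) (theta k nu).
Proof.
  intros B HB. unfold shift_meas, pushforward. rewrite !M_theta. f_equal.
  rewrite <- (M_G B k 0 (2 ^ k) HB). f_equal. apply pext; intro p. unfold A_rk.
  replace (bin_val (snd p) k + 2 ^ k)%nat with (bin_val (snd p) k + 1 * 2 ^ k)%nat by lia.
  rewrite Nat.Div0.mod_add, Nat.mod_small by apply bin_val_lt. tauto.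
Qed.

Lemma A_split a k : (A_rk 0 k a <-> A_rk 0 (S k) a \/ A_rk (2 ^ k) (S k) a).
Proof.
  unfold A_rk. rewrite bin_val_S. assert (H := bin_val_lt a k). destruct (a k); lia.
Qed.

Lemma M_rel2 k : meas_eq genZ (theta k nu)
      (fun B => / 2 * (theta (S k) nu B + shift_meas (2 ^ k) (theta (S k) nu) B)).
Proof.
  intros B HB. unfold shift_meas, pushforward.
  rewrite M_theta.
  assert (Hs : nu (fun p => B (fst p) /\ A_rk 0 k (snd p)) =
     nu (fun p => B (fst p) /\ A_rk 0 (S k) (snd p)) + nu (fun p => B (fst p) /\ A_rk (2 ^ k) (S k) (snd p))).
  { rewrite <- (cadd_add2 genProd nu M_cadd (fun p => B (fst p) /\ A_rk 0 (S k) (snd p)) (fun p => B (fst p) /\ A_rk (2 ^ k) (S k) (snd p))).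
    - f_equal. apply pext; intro p. assert (HH := A_split (snd p) k). tauto.
    - apply rect_meas with (S k); auto; apply A_rk_loc.
    - apply rect_meas with (S k); auto; apply A_rk_loc.
    - intros p [_ H1] [_ H2]. unfold A_rk in *. rewrite H1 in H2. assert (Hp := pow2_pos k). lia. }
  rewrite Hs.
  rewrite (M_rect B (S k) 0) by (auto; simpl; assert (Hp := pow2_pos k); lia).
  rewrite (M_rect B (S k) (2 ^ k)) by (auto; simpl; assert (Hp := pow2_pos k); lia).
  replace (fun w => B (shiftn 0 w)) with B by (apply pext; intro; rewrite shiftn_0; tauto).
  simpl pow. assert (Hp := pow2_R_pos k). field. lra.
Qed.

End InM.


Definition zdec (h : nat) : Z :=
  if Nat.even h then Z.of_nat (Nat.div2 h) else (- Z.of_nat (S (Nat.div2 h)))%Z.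
Definition coord (j : nat) : Z + nat :=
  if Nat.even j then inl (zdec (Nat.div2 j)) else inr (Nat.div2 j).
Definition idxZ (z : Z) : nat :=
  if (0 <=? z)%Z then (2 * Z.to_nat z)%nat else (S (2 * (Z.to_nat (- z) - 1)))%nat.
Definition idx (c : Z + nat) : nat :=
  match c with inl z => (2 * idxZ z)%nat | inr i => S (2 * i) end.

Lemma even_double n : Nat.even (2 * n) = true.
Proof. rewrite Nat.even_mul. reflexivity. Qed.
Lemma even_sdouble n : Nat.even (S (2 * n)) = false.
Proof. rewrite Nat.even_succ, Nat.odd_mul. reflexivity. Qed.

Lemma zdec_idx z : zdec (idxZ z) = z.
Proof.
  unfold zdec, idxZ. destruct (0 <=? z)%Z eqn:E.
  - rewrite even_double, Nat.div2_double. apply Z.leb_le in E. lia.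
  - rewrite even_sdouble, Nat.div2_succ_double. apply Z.leb_gt in E. lia.
Qed.

Lemma coord_idx c : coord (idx c) = c.
Proof.
  destruct c as [z|i]; unfold coord, idx.
  - rewrite even_double, Nat.div2_double, zdec_idx. reflexivity.
  - rewrite even_sdouble, Nat.div2_succ_double. reflexivity.
Qed.

Lemma idx_boundZ N z : (- Z.of_nat N <= z <= Z.of_nat N)%Z -> (idx (inl z) < 4 * N + 4)%nat.
Proof. intro H. unfold idx, idxZ. destruct (0 <=? z)%Z eqn:E; [apply Z.leb_le in E|apply Z.leb_gt in E]; lia. Qed.

Lemma idx_boundN N i : (i < N)%nat -> (idx (inr i) < 4 * N + 4)%nat.
Proof. unfold idx. lia. Qed.

Definition mkP (g : Z + nat -> bool) : XProd := (fun z => g (inl z), fun i => g (inr i)).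

Section Compact.
Variable G : nat -> XProd -> Prop.
Hypothesis Gloc : forall n, exists N, loc N (G n).
Hypothesis Gdec : forall n m x, (n <= m)%nat -> G m x -> G n x.
Hypothesis Gne : forall n, exists x, G n x.

Definition Qp (j : nat) (f : nat -> bool) : Prop :=
  forall n, exists y, G n y /\ forall i, (i < j)%nat -> evP y (coord i) = f i.

Definition setb (f : nat -> bool) (j : nat) (b : bool) : nat -> bool :=
  fun i => if Nat.eqb i j then b else f i.

Definition step (j : nat) (f : nat -> bool) : nat -> bool :=
  if excluded_middle_informative (Qp (S j) (setb f j true)) then setb f j true else setb f j false.

Fixpoint fs (j : nat) : nat -> bool :=
  match j with O => fun _ => false | S j => step j (fs j) end.

Lemma Qp_fs j : Qp j (fs j).
Proof.
  induction j.
  - intro n. destruct (Gne n) as [y Hy]. exists y. split; auto. intros; lia.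
  - simpl. unfold step. destruct (excluded_middle_informative (Qp (S j) (setb (fs j) j true))) as [Ht|Ht]; auto.
    apply NNPP; intro Hf.
    apply not_all_ex_not in Ht. destruct Ht as [n1 Hn1].
    apply not_all_ex_not in Hf. destruct Hf as [n2 Hn2].
    destruct (IHj (Nat.max n1 n2)) as [y [Gy Hy]].
    destruct (evP y (coord j)) eqn:Ej.
    + apply Hn1. exists y. split. apply (Gdec _ (Nat.max n1 n2)); auto; lia.
      intros i Hi. unfold setb. destruct (Nat.eqb_spec i j); [subst; auto| apply Hy; lia].
    + apply Hn2. exists y. split. apply (Gdec _ (Nat.max n1 n2)); auto; lia.
      intros i Hi. unfold setb. destruct (Nat.eqb_spec i j); [subst; auto| apply Hy; lia].
Qed.

Lemma fs_stable j i : (i < j)%nat -> fs j i = fs (S i) i.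
Proof.
  induction j; intros H; [lia|].
  destruct (Nat.eq_dec i j) as [e|ne]; [subst; auto|].
  change (fs (S j) i) with (step j (fs j) i). unfold step. rewrite <- IHj by lia.
  destruct (excluded_middle_informative _); unfold setb; destruct (Nat.eqb_spec i j); congruence.
Qed.

Lemma cantor_compact : exists x, forall n, G n x.
Proof.
  set (x := mkP (fun c => fs (S (idx c)) (idx c))).
  exists x. intro n. destruct (Gloc n) as [N HN].
  destruct (Qp_fs (4 * N + 4) n) as [y [Gy Hy]].
  apply (HN y x); auto.
  - intros z Hz. assert (Hb := idx_boundZ N z Hz).
    assert (E := Hy _ Hb). rewrite coord_idx in E. change (evP y (inl z)) with (fst y z) in E. etransitivity; [exact E|].
    unfold x, mkP. cbn [fst]. apply fs_stable; auto.
  - intros i Hi. assert (Hb := idx_boundN N i Hi).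
    assert (E := Hy _ Hb). rewrite coord_idx in E. change (evP y (inr i)) with (snd y i) in E. etransitivity; [exact E|].
    unfold x, mkP. cbn [snd]. apply fs_stable; auto.
Qed.
End Compact.


Definition bitsof (r : nat) : bseqN := fun i => Nat.testbit r i.

Lemma bitsof_high N r i : (i < N)%nat -> bitsof (2 ^ N + r) i = bitsof r i.
Proof.
  intro Hi. unfold bitsof.
  rewrite <- (Nat.mod_pow2_bits_low (2 ^ N + r) N i Hi).
  rewrite <- (Nat.mod_pow2_bits_low r N i Hi).
  f_equal. replace (2 ^ N + r)%nat with (r + 1 * 2 ^ N)%nat by lia. apply Nat.Div0.mod_add.
Qed.

Lemma fsum_single' f n r : (r < n)%nat -> (forall i, (i < n)%nat -> i <> r -> f i = 0) -> fsum f n = f r.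
Proof.
  intros Hr H. rewrite (fsum_ext f (fun i => if Nat.eq_dec i r then f i else 0)).
  - rewrite (fsum_single _ n r Hr). destruct (Nat.eq_dec r r); congruence.
    intros i Hi. destruct (Nat.eq_dec i r); congruence.
  - intros i Hi. destruct (Nat.eq_dec i r); auto.
Qed.

Definition goodE (N : nat) (E : XProd -> Prop) : Prop :=
  (forall w a a', (forall i, (i < N)%nat -> a i = a' i) -> E (w, a) -> E (w, a')) /\
  (forall a, measurable genZ (fun w => E (w, a))).

Lemma goodE_S N E : goodE N E -> goodE (S N) E.
Proof. intros [H1 H2]; split; auto. intros w a a' H. apply H1. intros; apply H; lia. Qed.

Lemma goodE_sec N E r a : goodE N E -> measurable genZ (fun w => E (shiftn r w, a)).
Proof. intros [_ H2]. apply (shiftn_meas r (fun w => E (w, a))); auto. Qed.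

Lemma loc_goodE N E : loc N E -> goodE N E.
Proof.
  intro H; split.
  - intros w a a' Ha. apply H; auto.
  - intro a. apply locZ_meas with N. intros w w' Hw. apply (H (w, a) (w', a)); auto.
Qed.

Lemma loc_L_empty : loc 0 (fun _ => False).
Proof. intros p q _ _ []. Qed.

Lemma loc_union N M A B : loc N A -> loc M B -> loc (Nat.max N M) (fun x => A x \/ B x).
Proof.
  intros HA HB p q H1 H2 [H|H]; [left; apply (HA p q) | right; apply (HB p q)]; auto;
  intros; try apply H1; try apply H2; lia.
Qed.

Lemma loc_compl N A : loc N A -> loc N (fun x => ~ A x).
Proof.
  intros HA p q H1 H2 Hp Hq. apply Hp. apply (HA q p); auto; intros; symmetry; auto.
Qed.

Lemma loc_inter N M A B : loc N A -> loc M B -> loc (Nat.max N M) (fun x => A x /\ B x).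
Proof.
  intros HA HB p q H1 H2 [H H']; split; [apply (HA p q) | apply (HB p q)]; auto;
  intros; try apply H1; try apply H2; lia.
Qed.

Section Construction.
Variable th : nat -> (bseqZ -> Prop) -> R.
Hypothesis Hth : forall k, is_prob_measure genZ (th k).
Hypothesis Hrel : theta_relations th.

Lemma th_cadd k : cadd genZ (th k).
Proof. apply prob_cadd, Hth. Qed.

Definition mN (N : nat) (E : XProd -> Prop) : R :=
  fsum (fun r => / 2 ^ N * th N (fun w => E (shiftn r w, bitsof r))) (2 ^ N).

Lemma mN_S N E : goodE N E -> mN N E = mN (S N) E.
Proof.
  intros HE. unfold mN.
  replace (2 ^ S N)%nat with (2 ^ N + 2 ^ N)%nat by (simpl; lia).
  rewrite fsum_split, <- fsum_plus. apply fsum_ext. intros r Hr.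
  set (X := fun w => E (shiftn r w, bitsof r)).
  assert (HX : measurable genZ X) by (apply goodE_sec with N; auto).
  replace (fun w => E (shiftn (2 ^ N + r) w, bitsof (2 ^ N + r))) with (fun w => X (shiftn (2 ^ N) w)).
  2:{ apply pext; intro w. unfold X. rewrite shiftn_add, (Nat.add_comm r).
      destruct HE as [H1 _]. split; apply H1; intros i Hi; rewrite bitsof_high; auto. }
  destruct (Hrel N) as [_ H2]. rewrite (H2 X HX). unfold shift_meas, pushforward.
  simpl pow. assert (Hp := pow2_R_pos N). field. lra.
Qed.

Lemma mN_plus N E j : goodE N E -> mN N E = mN (N + j) E.
Proof.
  intro HE. induction j.
  - rewrite Nat.add_0_r; auto.
  - rewrite IHj, Nat.add_succ_r. apply mN_S.
    clear IHj. induction j; [rewrite Nat.add_0_r; auto| rewrite Nat.add_succ_r; apply goodE_S; auto].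
Qed.

Lemma mN_eq N M E : goodE N E -> goodE M E -> mN N E = mN M E.
Proof.
  intros HN HM. destruct (le_ge_dec N M).
  - replace M with (N + (M - N))%nat by lia. apply mN_plus; auto.
  - replace N with (M + (N - M))%nat by lia. symmetry; apply mN_plus; auto.
Qed.

Lemma mN_nonneg N E : goodE N E -> 0 <= mN N E.
Proof.
  intro HE. unfold mN. apply fsum_nonneg. intros r Hr.
  apply Rmult_le_pos. left; apply Rinv_0_lt_compat, pow2_R_pos.
  destruct (th_cadd N) as [H1 _]. apply H1, goodE_sec with N; auto.
Qed.

Lemma mN_add N A B : goodE N A -> goodE N B -> (forall x, A x -> B x -> False) ->
  mN N (fun x => A x \/ B x) = mN N A + mN N B.
Proof.
  intros HA HB Hd. unfold mN. rewrite <- fsum_plus. apply fsum_ext. intros r Hr.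
  rewrite (cadd_add2 genZ (th N) (th_cadd N) (fun w => A (shiftn r w, bitsof r)) (fun w => B (shiftn r w, bitsof r))).
  - ring.
  - apply goodE_sec with N; auto.
  - apply goodE_sec with N; auto.
  - intros w; apply Hd.
Qed.

Definition mu0 (E : XProd -> Prop) : R :=
  match excluded_middle_informative (exists N, loc N E) with
  | left H => mN (proj1_sig (constructive_indefinite_description _ H)) E
  | right _ => 0
  end.

Lemma mu0_eq N E : loc N E -> mu0 E = mN N E.
Proof.
  intro HN. unfold mu0. destruct (excluded_middle_informative _) as [H|H].
  - destruct (constructive_indefinite_description _ H) as [M HM]. simpl.
    apply mN_eq; apply loc_goodE; auto.
  - exfalso; apply H; eauto.
Qed.

Lemma mu0_nonneg E : 0 <= mu0 E.
Proof.
  unfold mu0. destruct (excluded_middle_informative _) as [H|H]; [|lra].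
  destruct (constructive_indefinite_description _ H) as [M HM]. simpl.
  apply mN_nonneg, loc_goodE; auto.
Qed.

Lemma mu0_empty : mu0 (fun _ => False) = 0.
Proof.
  rewrite (mu0_eq 0 _ loc_L_empty). unfold mN. simpl.
  replace (fun w : bseqZ => False) with (fun _ : bseqZ => False) by reflexivity.
  rewrite (cadd_empty genZ (th 0) (th_cadd 0)). lra.
Qed.

Lemma mu0_full : mu0 (fun _ => True) = 1.
Proof.
  rewrite (mu0_eq 0). unfold mN. simpl.
  - destruct (Hth 0) as [_ [H _]]. rewrite H. lra.
  - intros p q _ _ _; auto.
Qed.

Lemma mu0_add2 N M A B : loc N A -> loc M B -> (forall x, A x -> B x -> False) ->
  mu0 (fun x => A x \/ B x) = mu0 A + mu0 B.
Proof.
  intros HA HB Hd.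
  assert (HA' := loc_mono N (Nat.max N M) A ltac:(lia) HA).
  assert (HB' := loc_mono M (Nat.max N M) B ltac:(lia) HB).
  rewrite (mu0_eq _ _ (loc_union N M A B HA HB)), (mu0_eq _ _ HA'), (mu0_eq _ _ HB').
  apply mN_add; auto; apply loc_goodE; auto.
Qed.

Definition Lset (E : XProd -> Prop) : Prop := exists N, loc N E.

Lemma Lfin (F : nat -> XProd -> Prop) n : (forall i, Lset (F i)) -> Lset (fun x => exists i, (i < n)%nat /\ F i x).
Proof.
  intro H. induction n.
  - exists 0%nat. intros p q _ _ [i [Hi _]]; lia.
  - destruct IHn as [N1 H1]. destruct (H n) as [N2 H2].
    exists (Nat.max N1 N2). replace (fun x => exists i, (i < S n)%nat /\ F i x) with
      (fun x => (fun x => exists i, (i < n)%nat /\ F i x) x \/ F n x).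
    apply loc_union; auto.
    apply pext; intro x; split.
    + intros [[i [Hi Hx]]|Hx]; [exists i; split; [lia|auto]| exists n; split; [lia|auto]].
    + intros [i [Hi Hx]]. destruct (Nat.eq_dec i n); [subst; auto| left; exists i; split; [lia|auto]].
Qed.

Lemma mu0_fin (F : nat -> XProd -> Prop) n : (forall i, Lset (F i)) -> disj F ->
  mu0 (fun x => exists i, (i < n)%nat /\ F i x) = fsum (fun i => mu0 (F i)) n.
Proof.
  intros H Hd. induction n.
  - simpl. replace (fun x => exists i, (i < 0)%nat /\ F i x) with (fun _ : XProd => False).
    apply mu0_empty. apply pext; intro x; split; [tauto| intros [i [Hi _]]; lia].
  - simpl. rewrite <- IHn.
    replace (fun x => exists i, (i < S n)%nat /\ F i x) with
      (fun x => (fun x => exists i, (i < n)%nat /\ F i x) x \/ F n x).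
    + destruct (Lfin F n H) as [N1 H1]. destruct (H n) as [N2 H2].
      apply (mu0_add2 N1 N2); auto.
      intros x [i [Hi Hx]] Hn. apply (Hd i n x); auto; lia.
    + apply pext; intro x; split.
      * intros [[i [Hi Hx]]|Hx]; [exists i; split; [lia|auto]| exists n; split; [lia|auto]].
      * intros [i [Hi Hx]]. destruct (Nat.eq_dec i n); [subst; auto| left; exists i; split; [lia|auto]].
Qed.

Lemma mu0_sadd (F : nat -> XProd -> Prop) : (forall n, Lset (F n)) -> disj F ->
  Lset (fun x => exists n, F n x) ->
  infinite_sum (fun n => mu0 (F n)) (mu0 (fun x => exists n, F n x)).
Proof.
  intros HF Hd [NU HU].
  set (Fin := fun n x => exists i, (i < n)%nat /\ F i x).
  set (G := fun n x => (exists m, F m x) /\ ~ Fin (S n) x).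
  assert (HM : exists M, forall x, ~ G M x).
  { apply NNPP; intro Hno.
    assert (Hne : forall n, exists x, G n x).
    { intro n. apply NNPP; intro Hn. apply Hno. exists n. intros x Hx; apply Hn; eauto. }
    destruct (cantor_compact G) as [x Hx].
    - intro n. destruct (Lfin F (S n) HF) as [N1 H1]. exists (Nat.max NU N1).
      apply loc_inter; auto. apply loc_compl; auto.
    - intros n m x Hnm [H1 H2]. split; auto. intro H3; apply H2.
      destruct H3 as [i [Hi Hx]]. exists i; split; auto; lia.
    - auto.
    - destruct (Hx 0%nat) as [[i Hi] _]. destruct (Hx i) as [_ H2]. apply H2. exists i; split; auto. }
  destruct HM as [M HM].
  assert (Hz : forall n, (n >= S M)%nat -> forall x, ~ F n x).
  { intros n Hn x Hx. apply (HM x). split; [exists n; auto|].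
    intros [i [Hi Hix]]. apply (Hd i n x); auto; lia. }
  assert (HU' : (fun x => exists n, F n x) = Fin (S M)).
  { apply pext; intro x; split.
    - intro H. apply NNPP; intro H'. apply (HM x). split; auto.
    - intros [i [_ H]]; eauto. }
  rewrite HU'. unfold Fin. rewrite mu0_fin by auto.
  apply infsum_eventually. intros n Hn.
  replace (F n) with (fun _ : XProd => False). apply mu0_empty.
  apply pext; intro x; split; [tauto| intro H; exact (Hz n Hn x H)].
Qed.

End Construction.


Module MC.
From HB Require Import structures.
From mathcomp Require Import all_boot all_order all_algebra.
From mathcomp Require Import boolp classical_sets functions cardinality reals ereal topology normedtype sequences esum measure_theory.measurable_structure measure_theory.measure_function measure_theory.measure_extension.
From mathcomp Require Import Rstruct Rstruct_topology.
Import Order.TTheory GRing.Theory Num.Theory.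
Local Open Scope classical_set_scope.

Lemma infsum_cvg (s : nat -> R) (l : R) :
  infinite_sum s l <-> ((fun n => (\sum_(0 <= i < n) s i)%R) @ \oo --> l).
Proof.
rewrite /infinite_sum; split.
- move=> H; rewrite (@cvgrPdist_lt _ R^o) => eps /RltP eps0.
  have [N HN] := H eps eps0.
  exists N.+1 => // n /= Hn.
  have := HN n.-1 ltac:(apply/ssrnat.leP; rewrite -ltnS prednK //; exact: leq_ltn_trans Hn).
  rewrite sum_f_R0E prednK; last by exact: leq_ltn_trans Hn.
  rewrite RdistE distrC => /RltP; done.
- rewrite (@cvgrPdist_lt _ R^o) => Hc eps /RltP eps0.
  have [N _ HN] := Hc eps eps0.
  exists N => n /ssrnat.leP Hn.
  have := HN n.+1 ltac:(by rewrite /=; apply: leqW).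
  rewrite sum_f_R0E RdistE distrC => /RltP; done.
Qed.

Lemma bigcup_ex (F : nat -> set XProd) : \bigcup_n F n = (fun x => exists n, F n x).
Proof.
by apply/funext => x; apply/propext; split => [[n _ Fx]|[n Fx]]; exists n.
Qed.

Section Ext.
Variable L : set (set XProd).
Hypothesis L0 : L set0.
Hypothesis LU : setU_closed L.
Hypothesis LC : setC_closed L.
Variable mu0 : set XProd -> R.
Hypothesis mu0_ge0 : forall A, Rle 0 (mu0 A).
Hypothesis mu0_0 : mu0 set0 = 0%R.
Hypothesis mu0_sadd : forall F : nat -> XProd -> Prop, (forall n, L (F n)) ->
  (forall n m x, n <> m -> F n x -> F m x -> False) -> L (fun x => exists n, F n x) ->
  infinite_sum (fun n => mu0 (F n)) (mu0 (fun x => exists n, F n x)).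

Definition XT : Type := XProd.
HB.instance Definition _ := gen_eqMixin XT.
HB.instance Definition _ := gen_choiceMixin XT.
HB.instance Definition _ := isPointed.Build XT (fun _ => false, fun _ => false).
HB.instance Definition _ := @isAlgebraOfSets.Build default_measure_display XT L L0 LU LC.

Definition mu0E (A : set XT) : \bar R := (mu0 A)%:E.
Lemma mu0E0 : mu0E set0 = 0%E.
Proof. by rewrite /mu0E mu0_0. Qed.
Lemma mu0E_ge0 A : (0 <= mu0E A)%E.
Proof. by rewrite /mu0E lee_fin; apply/RleP. Qed.

Lemma trivI_disj (F : nat -> set XProd) : trivIset setT F ->
  forall n m x, n <> m -> F n x -> F m x -> False.
Proof.
move=> tF n m x nm Fn Fm; apply: nm; apply: (tF n m I I); by exists x.
Qed.

Lemma mu0E_ssa : semi_sigma_additive mu0E.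
Proof.
move=> F mF tF mU.
have H : (fun n => (\sum_(0 <= i < n) mu0 (F i))%R) @ \oo --> mu0 (\bigcup_n F n).
  rewrite bigcup_ex; apply/infsum_cvg; apply: mu0_sadd => //.
  - exact: trivI_disj.
  - by rewrite -bigcup_ex.
rewrite /mu0E (_ : (fun n => _) = (fun n => (\sum_(0 <= i < n) mu0 (F i))%:E)); last first.
  by apply/funext => n; rewrite sumEFin.
apply: cvg_EFin; last exact: H.
by apply: nearW.
Qed.

HB.instance Definition _ := isMeasure.Build _ XT R mu0E mu0E0 mu0E_ge0 mu0E_ssa.

Definition nuE := measure_extension mu0E.
Definition nu (A : XProd -> Prop) : R := fine (nuE A).

Lemma nu_ext A : L A -> nu A = mu0 A.
Proof.
move=> LA; rewrite /nu /nuE /measure_extension measurable_mu_extE //.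
Qed.

Lemma meas_sub A : Defs.measurable L A ->
  measurable (A : set (g_sigma_algebraType (@measurable _ XT))).
Proof.
elim=> {A}.
- move=> A LA; apply: sub_sigma_algebra; exact: LA.
- exact: measurableT.
- move=> A _ mA. exact: measurableC.
- move=> A _ mA. rewrite -bigcup_ex. exact: bigcupT_measurable.
Qed.

Lemma nuE_L X : L X -> nuE X = mu0E X.
Proof. move=> LX; rewrite /nuE /measure_extension measurable_mu_extE //. Qed.

Lemma nuE_fin A : Defs.measurable L A -> nuE A = (nu A)%:E.
Proof.
move=> mA; rewrite /nu fineK // ge0_fin_numE ?measure_ge0 //.
apply: (le_lt_trans (y := nuE setT)).
  apply: le_measure; rewrite ?inE //.
  exact: meas_sub.
have LT : L setT by rewrite -setC0; exact: LC L0.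
rewrite nuE_L; [by rewrite /mu0E ltey | exact: LT].
Qed.

Lemma nu_ge0 A : Defs.measurable L A -> Rle 0 (nu A).
Proof.
move=> mA; apply/RleP; rewrite -lee_fin -nuE_fin //; exact: measure_ge0.
Qed.

Lemma nu_sadd (F : nat -> XProd -> Prop) : (forall n, Defs.measurable L (F n)) ->
  (forall n m x, n <> m -> F n x -> F m x -> False) ->
  infinite_sum (fun n => nu (F n)) (nu (fun x => exists n, F n x)).
Proof.
move=> mF dF; apply/infsum_cvg.
have mU : Defs.measurable L (fun x => exists n, F n x) by constructor.
have := @measure_sigma_additive _ _ _ nuE (F : nat -> set (g_sigma_algebraType (@measurable _ XT))).
move=> /(_ (fun n => meas_sub _ (mF n))).
have tF : trivIset setT F.
  move=> n m _ _ [x [Fn Fm]]; case: (eqVneq n m) => // nm.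
  by exfalso; apply: (dF n m x) => //; apply/eqP.
move=> /(_ tF); rewrite bigcup_ex => H0.
have H : ((fun n => \sum_(0 <= i < n) nuE (F i))%R @ \oo --> nuE (fun x => exists n, F n x)) := H0.
move: H; rewrite (nuE_fin _ mU).
rewrite (_ : (fun n => _) = (fun n => (\sum_(0 <= i < n) nu (F i))%:E)); last first.
  by apply/funext => n; rewrite -sumEFin; apply: eq_bigr => i _; rewrite nuE_fin.
move=> /fine_cvg; exact.
Qed.

End Ext.

Lemma extension (L : (XProd -> Prop) -> Prop) (mu0 : (XProd -> Prop) -> R) :
  L (fun _ => False) ->
  (forall A B, L A -> L B -> L (fun x => A x \/ B x)) ->
  (forall A, L A -> L (fun x => ~ A x)) ->
  (forall A, Rle 0 (mu0 A)) -> mu0 (fun _ => False) = 0%R ->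
  (forall F : nat -> XProd -> Prop, (forall n, L (F n)) ->
    (forall n m x, n <> m -> F n x -> F m x -> False) -> L (fun x => exists n, F n x) ->
    infinite_sum (fun n => mu0 (F n)) (mu0 (fun x => exists n, F n x))) ->
  exists nu : (XProd -> Prop) -> R,
    (forall A, L A -> nu A = mu0 A) /\
    (forall A, Defs.measurable L A -> Rle 0 (nu A)) /\
    (forall F : nat -> XProd -> Prop, (forall n, Defs.measurable L (F n)) ->
      (forall n m x, n <> m -> F n x -> F m x -> False) ->
      infinite_sum (fun n => nu (F n)) (nu (fun x => exists n, F n x))).
Proof.
move=> L0 LU LC g0 m0 sa.
have L0' : L set0 by [].
have LU' : setU_closed L by move=> A B; apply: LU.
have LC' : setC_closed L by move=> A; apply: LC.
have m0' : mu0 set0 = 0%R by [].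
exists (@nu L L0' LU' LC' mu0 g0 m0' sa); split; [|split].
- exact: nu_ext.
- exact: nu_ge0.
- exact: nu_sadd.
Qed.
End MC.


Open Scope R_scope.

Lemma infsum_scal (f : nat -> R) l c : infinite_sum f l -> infinite_sum (fun n => c * f n) (c * l).
Proof.
  intros H eps He.
  assert (Hc : 0 < Rabs c + 1) by (assert (0 <= Rabs c) by apply Rabs_pos; lra).
  destruct (H (eps / (Rabs c + 1))) as [N HN]. { apply Rdiv_lt_0_compat; lra. }
  exists N. intros n Hn. specialize (HN n Hn).
  assert (E : sum_f_R0 (fun n => c * f n) n = c * sum_f_R0 f n).
  { rewrite scal_sum. apply sum_eq. intros; ring. }
  rewrite E. unfold Rdist in *. replace (c * sum_f_R0 f n - c * l) with (c * (sum_f_R0 f n - l)) by ring.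
  rewrite Rabs_mult.
  assert (0 <= Rabs c) by apply Rabs_pos. assert (0 <= Rabs (sum_f_R0 f n - l)) by apply Rabs_pos.
  apply Rle_lt_trans with (Rabs c * (eps / (Rabs c + 1))).
  - apply Rmult_le_compat_l; lra.
  - apply Rlt_le_trans with ((Rabs c + 1) * (eps / (Rabs c + 1))).
    + apply Rmult_lt_compat_r; [apply Rdiv_lt_0_compat|]; lra.
    + right; field; lra.
Qed.

Lemma odo_mod x r m : (x < m)%nat -> (r < m)%nat -> ((x + 1) mod m = r <-> x = (r + m - 1) mod m)%nat.
Proof.
  intros Hx Hr. destruct r as [|r0].
  - rewrite (Nat.mod_small (0 + m - 1)) by lia.
    destruct (lt_dec (x + 1) m).
    + rewrite Nat.mod_small by lia. lia.
    + replace (x + 1)%nat with (0 + 1 * m)%nat by lia. rewrite Nat.Div0.mod_add, Nat.mod_small by lia. lia.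
  - replace (S r0 + m - 1)%nat with (r0 + 1 * m)%nat by lia. rewrite Nat.Div0.mod_add, (Nat.mod_small r0) by lia.
    destruct (lt_dec (x + 1) m).
    + rewrite Nat.mod_small by lia. lia.
    + replace (x + 1)%nat with (0 + 1 * m)%nat by lia. rewrite Nat.Div0.mod_add, Nat.mod_small by lia. lia.
Qed.

Lemma genZ_locZ G : genZ G -> exists N, locZ N G.
Proof.
  intros [z [b HG]]. exists (Z.to_nat (Z.abs z)). intros w w' Hw Gw.
  apply HG. apply HG in Gw. rewrite <- Hw; auto. lia.
Qed.

Lemma genProd_L G : genProd G -> Lset G.
Proof.
  intros [[z [b HG]]|[i [b HG]]].
  - exists (Z.to_nat (Z.abs z)). intros p q H1 H2 Gp. apply HG. apply HG in Gp. rewrite <- H1; auto. lia.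
  - exists (S i). intros p q H1 H2 Gp. apply HG. apply HG in Gp. rewrite <- H2; auto.
Qed.

Lemma meas_L A : measurable genProd A -> measurable Lset A.
Proof. apply meas_mono. intros G HG. apply meas_gen, genProd_L; auto. Qed.

Section Exist.
Variable th : nat -> (bseqZ -> Prop) -> R.
Hypothesis Hth : forall k, is_prob_measure genZ (th k).
Hypothesis Hrel : theta_relations th.

Lemma exists_nu : exists nu : (XProd -> Prop) -> R,
    (forall A, Lset A -> nu A = mu0 th A) /\
    (forall A, measurable Lset A -> 0 <= nu A) /\
    (forall F : nat -> XProd -> Prop, (forall n, measurable Lset (F n)) ->
      (forall n m x, n <> m -> F n x -> F m x -> False) ->
      infinite_sum (fun n => nu (F n)) (nu (fun x => exists n, F n x))).
Proof.
  apply MC.extension.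
  - exists 0%nat. apply loc_L_empty.
  - intros A B [N HA] [M HB]. exists (Nat.max N M). apply loc_union; auto.
  - intros A [N HA]. exists N. apply loc_compl; auto.
  - apply mu0_nonneg; auto.
  - apply mu0_empty; auto.
  - intros F HF Hd HU. apply mu0_sadd; auto.
Qed.

Lemma construct : exists nu, inM nu /\ (forall k, meas_eq genZ (theta k nu) (th k)).
Proof.
  destruct exists_nu as [nu [Hext [Hge Hsa]]].
  assert (Hc : cadd genProd nu).
  { split. intros A HA; apply Hge, meas_L; auto.
    intros F HF Hd. apply Hsa; auto. intro n; apply meas_L; auto. }
  assert (Hfull : nu (fun _ => True) = 1).
  { rewrite Hext. apply mu0_full; auto. exists 0%nat. intros p q _ _ _; auto. }
  assert (Hthc : forall k, cadd genZ (th k)) by (intro; apply prob_cadd; auto).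
  assert (Hloc : forall B N k r, locZ N B -> (r < 2 ^ k)%nat ->
            nu (fun p => B (fst p) /\ A_rk r k (snd p)) = / 2 ^ k * th k (fun w => B (shiftn r w))).
  { intros B N k r HB Hr.
    set (E := fun p : XProd => B (fst p) /\ A_rk r k (snd p)).
    assert (HE : loc (Nat.max N k) E).
    { intros p q H1 H2 [Hp1 Hp2]. split.
      - apply (HB (fst p)); auto; intros z Hz; apply H1; lia.
      - apply (A_rk_loc r k (snd p)); auto; intros i Hi; apply H2; lia. }
    assert (HgE : goodE k E).
    { split.
      - intros w a a' Ha [H1 H2]; split; auto. apply (A_rk_loc r k a a'); auto.
      - intro a. apply m_inter2; [apply locZ_meas with N; auto | apply (m_const genZ (A_rk r k a))]. }
    rewrite (Hext E) by (exists (Nat.max N k); auto).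
    rewrite (mu0_eq th Hrel _ E HE).
    rewrite (mN_eq th Hrel (Nat.max N k) k E (loc_goodE _ _ HE) HgE).
    unfold mN. rewrite (fsum_single' _ (2 ^ k) r Hr).
    - f_equal. f_equal. apply pext; intro w. unfold E, A_rk, bitsof. cbn [fst snd].
      rewrite bin_val_bits, (Nat.mod_small r) by auto. tauto.
    - intros i Hi Hne. replace (fun w => E (shiftn i w, bitsof i)) with (fun _ : bseqZ => False).
      + rewrite (cadd_empty genZ (th k) (Hthc k)). ring.
      + apply pext; intro w; unfold E, A_rk, bitsof; cbn [fst snd].
        rewrite bin_val_bits, (Nat.mod_small i) by auto. split; [tauto| intros [_ H]; lia]. }
  assert (Hrect : forall B k r, measurable genZ B -> (r < 2 ^ k)%nat ->
            nu (fun p => B (fst p) /\ A_rk r k (snd p)) = / 2 ^ k * th k (fun w => B (shiftn r w))).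
  { intros B k r HB Hr. revert B HB.
    apply (pi_lambda genZ (fun B => exists N, locZ N B)
             (fun B => nu (fun p => B (fst p) /\ A_rk r k (snd p)))
             (fun B => / 2 ^ k * th k (fun w => B (shiftn r w)))).
    - split.
      + intros A HA. apply Hge, meas_L, rect_meas with k; auto. apply A_rk_loc.
      + intros F HF Hd. cbv beta.
        assert (E : (fun p : XProd => (exists n, F n (fst p)) /\ A_rk r k (snd p)) =
                    (fun x => exists n, F n (fst x) /\ A_rk r k (snd x))).
        { apply pext; intro p; split; [intros [[n H1] H2]; eauto| intros [n [H1 H2]]; split; eauto]. }
        rewrite E.
        apply (Hsa (fun n p => F n (fst p) /\ A_rk r k (snd p))).
        * intro n; apply meas_L, rect_meas with k; auto; apply A_rk_loc.
        * intros n m x Hnm [H1 _] [H2 _]. eapply Hd; eauto.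
    - split.
      + intros A HA. apply Rmult_le_pos. left; apply Rinv_0_lt_compat, pow2_R_pos.
        apply (Hthc k), shiftn_meas; auto.
      + intros F HF Hd. cbv beta. apply infsum_scal.
        replace (fun w => exists n, F n (shiftn r w)) with (fun w => exists n, (fun n w => F n (shiftn r w)) n w) by reflexivity.
        apply (Hthc k). intro n; apply shiftn_meas; auto.
        intros n m x Hnm H1 H2. eapply Hd; eauto.
    - intros A B [N HA] [M HB]. exists (Nat.max N M). intros w w' Hw [H1 H2].
      split; [apply (HA w) | apply (HB w)]; auto; intros z Hz; apply Hw; lia.
    - intros A [N HA]. apply locZ_meas with N; auto.
    - intros G HG. apply meas_gen, genZ_locZ; auto.
    - cbv beta. apply (Hloc (fun _ => True) 0%nat); auto. intros w w' _ _; auto.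
    - intros A [N HA]. cbv beta. apply (Hloc A N); auto.
  }
  exists nu. split; [split; [split; [|split]|] |].
  - intros A HA. apply Hge, meas_L; auto.
  - auto.
  - intros F HF Hd. apply Hsa; auto. intro n; apply meas_L; auto.
  -
    apply rect_unique; auto.
    + split.
      * intros A HA. unfold pushforward. apply Hge, meas_L, SxO_meas; auto.
      * intros F HF Hd. unfold pushforward.
        apply (Hsa (fun n p => F n (SxO p))).
        -- intro n; apply meas_L, SxO_meas; auto.
        -- intros n m x Hnm H1 H2; eapply Hd; eauto.
    + intros B k r HB Hr. unfold pushforward.
      set (r' := ((r + 2 ^ k - 1) mod 2 ^ k)%nat).
      assert (Hr' : (r' < 2 ^ k)%nat) by (apply Nat.mod_upper_bound, pow2_pos).
      transitivity (nu (fun p => (fun w => B (shiftn 1 w)) (fst p) /\ A_rk r' k (snd p))).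
      { f_equal. apply pext; intro p. unfold SxO, A_rk, Defs.shift. cbn [fst snd].
        rewrite odometer_bin. rewrite (odo_mod _ _ _ (bin_val_lt (snd p) k) Hr). tauto. }
      rewrite (Hrect (fun w => B (shiftn 1 w)) k r') by (auto; apply shiftn_meas; auto).
      rewrite (Hrect B k r) by auto. f_equal.
      replace (fun w => B (shiftn 1 (shiftn r' w))) with (fun w => B (shiftn (1 + r') w))
        by (apply pext; intro w; rewrite shiftn_add; tauto).
      destruct r as [|r0].
      * unfold r'. rewrite Nat.mod_small by (assert (Hp := pow2_pos k); lia).
        replace (1 + (0 + 2 ^ k - 1))%nat with (2 ^ k)%nat by (assert (Hp := pow2_pos k); lia).
        destruct (Hrel k) as [H1 _]. specialize (H1 B HB). unfold shift_meas, pushforward in H1.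
        rewrite H1. f_equal. apply pext; intro w; rewrite shiftn_0; tauto.
      * unfold r'. replace (S r0 + 2 ^ k - 1)%nat with (r0 + 1 * 2 ^ k)%nat by lia.
        rewrite Nat.Div0.mod_add, Nat.mod_small by lia. reflexivity.
  - intros k B HB. unfold theta, P_rk.
    rewrite (Hrect B k 0%nat) by (auto; apply Nat.neq_0_lt_0, pow2_pos).
    transitivity ((/ 2 ^ k * th k B) / (/ 2 ^ k * th k (fun _ => True))).
    + f_equal.
      * f_equal. f_equal. apply pext; intro w; rewrite shiftn_0; tauto.
      * transitivity (nu (fun p => (fun _ => True) (fst p) /\ A_rk 0 k (snd p))).
        { f_equal; apply pext; intro; cbv beta; tauto. }
        apply (Hrect (fun _ => True) k 0%nat). apply m_full. apply Nat.neq_0_lt_0, pow2_pos.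
    + destruct (Hth k) as [_ [H1 _]]. rewrite H1. assert (Hp := pow2_R_pos k). field. lra.
Qed.
End Exist.


Lemma determine nu nu' : inM nu -> inM nu' -> (forall k, meas_eq genZ (theta k nu) (theta k nu')) ->
  (forall k r, (r < 2 ^ k)%nat -> meas_eq genZ (P_rk r k nu) (P_rk r k nu')) /\ meas_eq genProd nu nu'.
Proof.
  intros H H' Hth. split.
  - intros k r Hr B HB. rewrite (M_P nu H), (M_P nu' H') by auto. apply Hth, shiftn_meas; auto.
  - apply rect_unique; [apply M_cadd; auto | apply M_cadd; auto |].
    intros B k r HB Hr. rewrite (M_rect nu H), (M_rect nu' H') by auto. f_equal. apply Hth, shiftn_meas; auto.
Qed.

Theorem corollary1 :
  (* the two relations hold for every nu in M *)
  (forall nu, inM nu -> theta_relations (fun k => theta k nu)) /\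
  (* (theta_k[nu])_k determines all P_{r,k}[nu] and nu *)
  (forall nu nu', inM nu -> inM nu' ->
     (forall k, meas_eq genZ (theta k nu) (theta k nu')) ->
     (forall k r, (r < 2 ^ k)%nat -> meas_eq genZ (P_rk r k nu) (P_rk r k nu')) /\
     meas_eq genProd nu nu') /\
  (* converse: existence and uniqueness *)
  (forall th : nat -> (bseqZ -> Prop) -> R,
     (forall k, is_prob_measure genZ (th k)) ->
     theta_relations th ->
     exists nu, inM nu /\ (forall k, meas_eq genZ (theta k nu) (th k)) /\
       (forall nu', inM nu' -> (forall k, meas_eq genZ (theta k nu') (th k)) ->
          meas_eq genProd nu' nu)).
Proof.
  split; [|split].
  - intros nu H k. split; [apply M_rel1 | apply M_rel2]; auto.
  - apply determine.
  - intros th Hth Hrel. destruct (construct th Hth Hrel) as [nu [HM Heq]].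
    exists nu. split; [auto| split; [auto|]].
    intros nu' HM' Heq'. apply (determine nu' nu HM' HM).
    intros k B HB. rewrite Heq', Heq; auto.
Qed.
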